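(* Let $E\subset\mathbb{R}^2$, let $E_o:=\{(x,y)\in E: x\neq y\}$, and let $C\subseteq E_o$ be connected in $E_o$. If uniqueness of portfolio positions holds at some point of $C$, then uniqueness of portfolio positions holds at all points of $C$. Likewise, if convergence of portfolio positions holds at some point of $C$, then convergence of portfolio positions holds at all points of $C$.
   Context: A semistatic strategy on $E$ is a function $v:E\to\mathbb{R}$ for which there exist $h,g:\mathbb{R}\to\mathbb{R}$ (a stock position $h$ and option position $g$) with $v(x,y)=h(x)(y-x)+g(y)$ for all $(x,y)\in E$; such a pair $(h,g)$ is called a portfolio position of $v$. Two points $(x,y),(x',y')\in E_o$ are connected if there exist $k\in\mathbb{N}_0$ and $(x_i,y_i)_{i=1}^k\in E_o^k$ such that all points of the list $(x,y),(x_1,y),(x_1,y_1),(x_2,y_1),\dots,(x_k,y_k),(x',y_k),(x',y')$ belong to $E_o$; a set $C\subseteq E_o$ is connected (in $E_o$) if any two of its points are connected. Uniqueness of portfolio positions holds at $(x,y)\in E$ if for every semistatic strategy $v$ on $E$, the values $h(x)$ and $g(y)$ are the same for all portfolio positions $(h,g)$ of $v$. In that situation, convergence of portfolio positions holds at $(x,y)$ if for any semistatic strategies $v_n$ on $E$ converging pointwise on $E$, with portfolio positions $(h_n,g_n)$, the sequences $h_n(x)$ and $g_n(y)$ converge. *)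

(* Defs.v *)
From Stdlib Require Import Reals List.
Open Scope R_scope.

Definition Eo (E : R -> R -> Prop) (x y : R) : Prop := E x y /\ x <> y.

Definition portfolio_position (E : R -> R -> Prop) (v : R -> R -> R)
  (h g : R -> R) : Prop :=
  forall x y, E x y -> v x y = h x * (y - x) + g y.

Definition semistatic (E : R -> R -> Prop) (v : R -> R -> R) : Prop :=
  exists h g : R -> R, portfolio_position E v h g.

(* chain E x y l x' y' : with l = [(x_1,y_1);...;(x_k,y_k)], all points of
   (x,y),(x_1,y),(x_1,y_1),(x_2,y_1),...,(x_k,y_k),(x',y_k),(x',y')
   belong to E_o. *)
Fixpoint chain (E : R -> R -> Prop) (x y : R) (l : list (R * R))
  (x' y' : R) : Prop :=
  match l with
  | nil => Eo E x y /\ Eo E x' y /\ Eo E x' y'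
  | (x1, y1) :: l' => Eo E x y /\ Eo E x1 y /\ chain E x1 y1 l' x' y'
  end.

Definition connected_pts (E : R -> R -> Prop) (x y x' y' : R) : Prop :=
  exists l : list (R * R), chain E x y l x' y'.

Definition connected_in_Eo (E C : R -> R -> Prop) : Prop :=
  (forall x y, C x y -> Eo E x y) /\
  (forall x y x' y', C x y -> C x' y' -> connected_pts E x y x' y').

Definition uniqueness_at (E : R -> R -> Prop) (x y : R) : Prop :=
  E x y /\
  forall v h g h' g', semistatic E v ->
    portfolio_position E v h g -> portfolio_position E v h' g' ->
    h x = h' x /\ g y = g' y.

(* convergence of portfolio positions at (x,y) (defined in the situation
   where uniqueness holds at (x,y)) *)
Definition convergence_at (E : R -> R -> Prop) (x y : R) : Prop :=
  uniqueness_at E x y /\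
  forall (v : nat -> R -> R -> R) (h g : nat -> R -> R),
    (forall n, semistatic E (v n)) ->
    (forall a b, E a b -> exists l, Un_cv (fun n => v n a b) l) ->
    (forall n, portfolio_position E (v n) (h n) (g n)) ->
    (exists l, Un_cv (fun n => h n x) l) /\ (exists l, Un_cv (fun n => g n y) l).

(* Main.v *)
Require Import Defs.
From Stdlib Require Import Reals List Lra.
Open Scope R_scope.

Lemma cv_ext (u w : nat -> R) l : (forall n, u n = w n) -> Un_cv u l -> Un_cv w l.
Proof. unfold Un_cv; intros H H0 eps He. destruct (H0 eps He) as [N HN].
  exists N; intros n Hn; rewrite <- H; auto. Qed.

Lemma cv_const (c : R) : Un_cv (fun _ => c) c.
Proof. unfold Un_cv; intros eps He; exists 0%nat; intros; rewrite R_dist_eq; lra. Qed.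

Lemma chain_prop (E : R -> R -> Prop) (Q : R -> R -> Prop) :
  (forall a b a', Q a b -> Eo E a' b -> Q a' b) ->
  (forall a b b', Q a b -> Eo E a b' -> Q a b') ->
  forall l x y x' y', chain E x y l x' y' -> Q x y -> Q x' y'.
Proof.
  intros S1 S2 l; induction l as [|[x1 y1] l IH]; simpl; intros x y x' y' Hc HQ.
  - destruct Hc as [H1 [H2 H3]]. eapply S2; [eapply S1; eauto| eauto].
  - destruct Hc as [H1 [H2 H3]]. eapply IH; [exact H3|].
    eapply S2; [eapply S1; eauto|]. clear -H3. destruct l as [|[? ?] ?]; simpl in H3; tauto.
Qed.

Definition Qu E a b := forall v h g h' g', semistatic E v ->
    portfolio_position E v h g -> portfolio_position E v h' g' ->
    h a = h' a /\ g b = g' b.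

Definition Qc E a b := forall (v : nat -> R -> R -> R) (h g : nat -> R -> R),
    (forall n, semistatic E (v n)) ->
    (forall a b, E a b -> exists l, Un_cv (fun n => v n a b) l) ->
    (forall n, portfolio_position E (v n) (h n) (g n)) ->
    (exists l, Un_cv (fun n => h n a) l) /\ (exists l, Un_cv (fun n => g n b) l).

Lemma Qu_chain E l x y x' y' : chain E x y l x' y' -> Qu E x y -> Qu E x' y'.
Proof.
  apply chain_prop; unfold Qu; intros a b c HQ [HE Hne] v h g h' g' Hs P1 P2;
  destruct (HQ v h g h' g' Hs P1 P2) as [Ha Hb].
  - split; auto. pose proof (P1 c b HE) as e1. pose proof (P2 c b HE) as e2.
    assert (Hd: (h c - h' c) * (b - c) = 0) by lra.
    apply Rmult_integral in Hd. destruct Hd as [Hd|Hd]; [lra|]. exfalso; apply Hne; lra.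
  - split; auto. pose proof (P1 a c HE) as e1. pose proof (P2 a c HE) as e2.
    rewrite Ha in e1. lra.
Qed.

Lemma Qc_chain E l x y x' y' : chain E x y l x' y' -> Qc E x y -> Qc E x' y'.
Proof.
  apply chain_prop; unfold Qc; intros a b c HQ [HE Hne] v h g Hs Hv P;
  destruct (HQ v h g Hs Hv P) as [[la Ha] [lb Hb]].
  - split; [|eauto]. destruct (Hv c b HE) as [lv Hlv].
    exists ((lv - lb) * / (b - c)).
    apply cv_ext with (u := fun n => (v n c b - g n b) * / (b - c)).
    + intro n. rewrite (P n c b HE). field. intro; apply Hne; lra.
    + apply CV_mult; [apply CV_minus; auto|apply cv_const].
  - split; [eauto|]. destruct (Hv a c HE) as [lv Hlv].
    exists (lv - la * (c - a)).
    apply cv_ext with (u := fun n => v n a c - h n a * (c - a)).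
    + intro n. rewrite (P n a c HE). ring.
    + apply CV_minus; auto. apply CV_mult; [auto|apply cv_const].
Qed.

Theorem lemma2p4 (E C : R -> R -> Prop) :
  connected_in_Eo E C ->
  ((exists x0 y0, C x0 y0 /\ uniqueness_at E x0 y0) ->
     forall x y, C x y -> uniqueness_at E x y) /\
  ((exists x0 y0, C x0 y0 /\ convergence_at E x0 y0) ->
     forall x y, C x y -> convergence_at E x y).
Proof.
  intros [HCE HCc].
  assert (U : (exists x0 y0, C x0 y0 /\ uniqueness_at E x0 y0) ->
     forall x y, C x y -> uniqueness_at E x y).
  { intros [x0 [y0 [HC0 [_ HU]]]] x y HC. split; [apply (HCE x y HC)|].
    destruct (HCc x0 y0 x y HC0 HC) as [l Hl].
    exact (Qu_chain E l x0 y0 x y Hl HU). }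
  split; [exact U|].
  intros [x0 [y0 [HC0 [HU HK]]]] x y HC. split.
  - apply U; eauto.
  - destruct (HCc x0 y0 x y HC0 HC) as [l Hl].
    exact (Qc_chain E l x0 y0 x y Hl HK).
Qed.
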